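(* Let $\widehat B\in\mathbb R^K$ be fixed and define, for $\widehat U=(\widehat h,\widehat{q^x},\widehat{q^y})\in\mathbb R^{3K}$ with $\mathcal P(\widehat h)$ invertible, $$E(\widehat U)=\tfrac12\big((\widehat{q^x})^\top\widehat u+(\widehat{q^y})^\top\widehat v\big)+\tfrac12 g\|\widehat h\|^2+g\,\widehat h^\top\widehat B,\qquad \widehat u=\mathcal P^{-1}(\widehat h)\widehat{q^x},\ \widehat v=\mathcal P^{-1}(\widehat h)\widehat{q^y}.$$ If $\mathcal P(\widehat h)$ is positive definite, then $E$ is convex in $\widehat U$.
   Context: Let $\xi$ be a random variable in $\mathbb R^d$ with density $\rho$ having finite moments of all orders, and let $\phi_1\equiv1,\phi_2,\dots,\phi_K$ be polynomials orthonormal in $L^2_\rho$. For $k=1,\dots,K$ let $\mathcal M_k\in\mathbb R^{K\times K}$ with $(\mathcal M_k)_{l,m}=\int\phi_k\phi_l\phi_m\rho$, and for $\widehat z\in\mathbb R^K$ set $\mathcal P(\widehat z)=\sum_{k=1}^K\widehat z_k\mathcal M_k$. $g>0$ is a constant. Convexity is understood on the (convex) set of $\widehat U$ with $\mathcal P(\widehat h)$ positive definite. *)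

(* Defs.v *)
From HB Require Import structures.
From mathcomp Require Import all_boot all_order all_algebra.
From mathcomp Require Import all_classical all_reals all_analysis.
Set Implicit Arguments. Unset Strict Implicit. Unset Printing Implicit Defensive.
Import Order.TTheory GRing.Theory Num.Theory.
Local Open Scope ring_scope.

Definition monomial (R : realType) (d : nat) (e : 'I_d -> nat) (x : 'rV[R]_d) : R :=
  \prod_(j < d) x ord0 j ^+ e j.

Definition is_polyfun (R : realType) (d : nat) (f : 'rV[R]_d -> R) : Prop :=
  exists (n : nat) (c : 'I_n -> R) (e : 'I_n -> 'I_d -> nat),
    forall x, f x = \sum_(i < n) c i * monomial (e i) x.

Definition posdef (R : realType) (K : nat) (A : 'M[R]_K) : Prop :=
  A^T = A /\ forall x : 'cV[R]_K, x != 0 -> 0 < (x^T *m A *m x) ord0 ord0.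

Definition Mtens (R : realType) (d0 : measure_display) (T : measurableType d0)
  (P : probability T R) (d K : nat) (xi : T -> 'rV[R]_d)
  (phi : 'I_K -> 'rV[R]_d -> R) (k : 'I_K) : 'M[R]_K :=
  \matrix_(l < K, m < K)
    Rintegral P setT (fun w => phi k (xi w) * phi l (xi w) * phi m (xi w)).

Definition Pmat (R : realType) (d0 : measure_display) (T : measurableType d0)
  (P : probability T R) (d K : nat) (xi : T -> 'rV[R]_d)
  (phi : 'I_K -> 'rV[R]_d -> R) (z : 'cV[R]_K) : 'M[R]_K :=
  \sum_(k < K) z k ord0 *: Mtens P xi phi k.

Definition energy (R : realType) (d0 : measure_display) (T : measurableType d0)
  (P : probability T R) (d K : nat) (xi : T -> 'rV[R]_d)
  (phi : 'I_K -> 'rV[R]_d -> R) (g : R) (B h qx qy : 'cV[R]_K) : R :=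
  let u := invmx (Pmat P xi phi h) *m qx in
  let v := invmx (Pmat P xi phi h) *m qy in
  2^-1 * ((qx^T *m u) ord0 ord0 + (qy^T *m v) ord0 ord0)
  + 2^-1 * g * (h^T *m h) ord0 ord0 + g * (h^T *m B) ord0 ord0.

(* Main.v *)
Require Import Defs.
From HB Require Import structures.
From mathcomp Require Import all_boot all_order all_algebra.
From mathcomp Require Import all_classical all_reals all_analysis.
From mathcomp Require Import ring lra.
Import Order.TTheory GRing.Theory Num.Theory.
Set Implicit Arguments. Unset Strict Implicit.
Local Open Scope ring_scope.

Section S.
Variables (R : realFieldType) (n : nat).
Implicit Types (x y z : 'cV[R]_n) (A : 'M[R]_n).

Definition dot x y : R := (x^T *m y) ord0 ord0.

Lemma dotE x y : dot x y = \sum_i x i ord0 * y i ord0.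
Proof. by rewrite /dot !mxE; apply: eq_bigr => i _; rewrite mxE. Qed.

Lemma dotC x y : dot x y = dot y x.
Proof. by rewrite !dotE; apply: eq_bigr => i _; rewrite mulrC. Qed.

Lemma dotDZl a b x y z : dot (a *: x + b *: y) z = a * dot x z + b * dot y z.
Proof.
rewrite !dotE !mulr_sumr -big_split; apply: eq_bigr => i _.
by rewrite !mxE /= mulrDl !mulrA.
Qed.

Lemma dotDZr a b x y z : dot z (a *: x + b *: y) = a * dot z x + b * dot z y.
Proof. by rewrite dotC dotDZl !(dotC z). Qed.

Lemma dotB x y z : dot (x - y) z = dot x z - dot y z.
Proof.
rewrite !dotE -sumrB; apply: eq_bigr => i _; by rewrite !mxE mulrBl.
Qed.

Lemma dotBr x y z : dot z (x - y) = dot z x - dot z y.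
Proof. by rewrite dotC dotB !(dotC z). Qed.

Lemma dot_ge0 x : 0 <= dot x x.
Proof. rewrite dotE; apply: sumr_ge0 => i _; by rewrite -expr2 sqr_ge0. Qed.

Lemma dotA x A y : dot x (A *m y) = dot (A^T *m x) y.
Proof. by rewrite /dot trmx_mul trmxK mulmxA. Qed.

Definition pd A := A^T = A /\ forall x, x != 0 -> 0 < (x^T *m A *m x) ord0 ord0.

Lemma pd_dot A x : pd A -> 0 <= dot x (A *m x).
Proof.
move=> [_ H]; have [->|nz] := eqVneq x 0.
  by rewrite mulmx0 dotE big1 // => i _; rewrite mxE mul0r.
by rewrite /dot mulmxA; apply/ltW/H.
Qed.

Lemma pd_unit A : pd A -> A \in unitmx.
Proof.
move=> [S H]; rewrite unitmxE unitfE; apply/negP => /det0P [v nz vA].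
have : v^T != 0 by apply: contra nz => /eqP e; rewrite -(trmxK v) e trmx0.
move=> /H; rewrite trmxK vA mul0mx mxE ltxx //.
Qed.

Lemma key_ineq A x q : pd A ->
  2 * dot x q - dot x (A *m x) <= dot q (invmx A *m q).
Proof.
move=> pA; have uA := pd_unit pA; set y := invmx A *m q.
have Ay : A *m y = q by rewrite /y mulKVmx.
have := pd_dot (x - y) pA.
rewrite mulmxBr Ay dotB !dotBr.
have -> : dot y (A *m x) = dot x q.
  by rewrite dotA (proj1 pA) Ay dotC.
rewrite (dotC y q); lra.
Qed.

Lemma joint_convex A1 A2 q1 q2 t : pd A1 -> pd A2 -> 0 <= t <= 1 ->
  (t *: A1 + (1 - t) *: A2) \in unitmx ->
  dot (t *: q1 + (1 - t) *: q2) (invmx (t *: A1 + (1 - t) *: A2) *m (t *: q1 + (1 - t) *: q2))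
  <= t * dot q1 (invmx A1 *m q1) + (1 - t) * dot q2 (invmx A2 *m q2).
Proof.
move=> p1 p2 /andP [t0 t1] uA.
set A := t *: A1 + _; set q := t *: q1 + _; set x := invmx A *m q.
have Ax : A *m x = q by rewrite /x mulKVmx.
have e : dot q x = 2 * dot x q - dot x (A *m x) by rewrite Ax dotC; ring.
rewrite e.
have -> : A *m x = t *: (A1 *m x) + (1 - t) *: (A2 *m x).
  by rewrite /A mulmxDl -!scalemxAl.
rewrite dotDZr /q dotDZr.
have k1 := key_ineq x q1 p1; have k2 := key_ineq x q2 p2.
have s0 : 0 <= 1 - t by lra.
have := ler_wpM2l t0 k1; have := ler_wpM2l s0 k2. lra.
Qed.

End S.

Lemma energyE (R : realType) (d0 : measure_display) (T : measurableType d0)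
  (P : probability T R) (d K : nat) (xi : T -> 'rV[R]_d)
  (phi : 'I_K -> 'rV[R]_d -> R) (g : R) (B h qx qy : 'cV[R]_K) :
  energy P xi phi g B h qx qy =
  2^-1 * (dot qx (invmx (Pmat P xi phi h) *m qx) + dot qy (invmx (Pmat P xi phi h) *m qy))
  + 2^-1 * g * dot h h + g * dot h B.
Proof. by []. Qed.

Lemma PmatL (R : realType) (d0 : measure_display) (T : measurableType d0)
  (P : probability T R) (d K : nat) (xi : T -> 'rV[R]_d)
  (phi : 'I_K -> 'rV[R]_d -> R) a b (h1 h2 : 'cV[R]_K) :
  Pmat P xi phi (a *: h1 + b *: h2) = a *: Pmat P xi phi h1 + b *: Pmat P xi phi h2.
Proof.
rewrite /Pmat !scaler_sumr -big_split; apply: eq_bigr => k _.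
by rewrite !mxE scalerDl !scalerA.
Qed.

Lemma pd_comb (R : realFieldType) n (A1 A2 : 'M[R]_n) t : pd A1 -> pd A2 -> 0 <= t <= 1 ->
  pd (t *: A1 + (1 - t) *: A2).
Proof.
move=> [S1 H1] [S2 H2] /andP [t0 t1]; split.
  by rewrite linearD !linearZ /= S1 S2.
move=> x nz; have := H1 x nz; have := H2 x nz.
rewrite mulmxDr mulmxDl -!scalemxAr -!scalemxAl !mxE.
nra.
Qed.

Lemma final_real (R : realFieldType) (t g X Y x1 x2 y1 y2 H H11 H12 H22 L L1 L2 : R) :
  0 <= t <= 1 -> 0 < g -> X <= t * x1 + (1 - t) * x2 -> Y <= t * y1 + (1 - t) * y2 ->
  H = t * (t * H11 + (1 - t) * H12) + (1 - t) * (t * H12 + (1 - t) * H22) ->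
  L = t * L1 + (1 - t) * L2 -> 0 <= H11 - H12 - (H12 - H22) ->
  2^-1 * (X + Y) + 2^-1 * g * H + g * L <=
  t * (2^-1 * (x1 + y1) + 2^-1 * g * H11 + g * L1) +
  (1 - t) * (2^-1 * (x2 + y2) + 2^-1 * g * H22 + g * L2).
Proof.
move=> /andP [t0 t1] g0 eX eY -> -> hh.
rewrite -subr_ge0.
have -> : t * (2^-1 * (x1 + y1) + 2^-1 * g * H11 + g * L1) +
  (1 - t) * (2^-1 * (x2 + y2) + 2^-1 * g * H22 + g * L2) -
  (2^-1 * (X + Y) + 2^-1 * g * (t * (t * H11 + (1 - t) * H12) + (1 - t) * (t * H12 + (1 - t) * H22)) + g * (t * L1 + (1 - t) * L2))
  = 2^-1 * ((t * x1 + (1 - t) * x2 - X) + (t * y1 + (1 - t) * y2 - Y)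
     + g * ((t * (1 - t)) * (H11 - H12 - (H12 - H22)))) by ring.
have h2 : 0 <= 2^-1 :> R by rewrite invr_ge0 ler0n.
apply: mulr_ge0 => //; apply: addr_ge0; first (apply: addr_ge0; rewrite subr_ge0 //).
apply: mulr_ge0; first exact: ltW.
apply: mulr_ge0 => //; apply: mulr_ge0 => //; by rewrite subr_ge0.
Qed.

Theorem lemma3p2 (R : realType) (d0 : measure_display) (T : measurableType d0)
  (P : probability T R) (d K : nat) (xi : T -> 'rV[R]_d)
  (phi : 'I_K -> 'rV[R]_d -> R) (g : R) (B : 'cV[R]_K) :
  (* xi is a random variable in R^d *)
  (forall j : 'I_d, measurable_fun setT (fun w => xi w ord0 j)) ->
  (* finite moments of all orders *)
  (forall e : 'I_d -> nat,
      P.-integrable setT (fun w => (monomial e (xi w))%:E)) ->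
  (* phi_1 = 1, the phi_k are polynomials, orthonormal in L^2 *)
  (0 < K)%N ->
  (forall k : 'I_K, val k = 0%N -> forall x, phi k x = 1) ->
  (forall k, is_polyfun (phi k)) ->
  (forall l m : 'I_K,
      Rintegral P setT (fun w => phi l (xi w) * phi m (xi w)) = (l == m)%:R) ->
  0 < g ->
  (* E is convex on the convex set {U | P(h) positive definite} *)
  forall (h1 qx1 qy1 h2 qx2 qy2 : 'cV[R]_K) (t : R),
    posdef (Pmat P xi phi h1) -> posdef (Pmat P xi phi h2) ->
    0 <= t <= 1 ->
    energy P xi phi g B (t *: h1 + (1 - t) *: h2)
                         (t *: qx1 + (1 - t) *: qx2)
                         (t *: qy1 + (1 - t) *: qy2)
    <= t * energy P xi phi g B h1 qx1 qy1
       + (1 - t) * energy P xi phi g B h2 qx2 qy2.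
Proof.
move=> _ _ _ _ _ _ g0 h1 qx1 qy1 h2 qx2 qy2 t p1 p2 t01.
have pc := pd_comb p1 p2 t01.
have u := pd_unit pc.
rewrite !energyE (PmatL P xi phi t (1 - t) h1 h2).
have ex := joint_convex qx1 qx2 p1 p2 t01 u.
have ey := joint_convex qy1 qy2 p1 p2 t01 u.
have hh := dot_ge0 (h1 - h2).
rewrite dotB !dotBr (dotC h2 h1) in hh.
apply: (final_real t01 g0 ex ey _ _ hh).
  by rewrite !dotDZl !dotDZr (dotC h2 h1).
by rewrite dotDZl.
Qed.
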